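(* Assume $0<b\gamma-m\mu<\mu^2$, so that $E_4=\Big(\frac{\mu^2-b\gamma+m\mu}{\mu\gamma},\frac{b\gamma-m\mu}{\mu\gamma},0,0\Big)$ has strictly positive $B$- and $I$-components. Then the Jacobian matrix of system (S) at $E_4$ never has a pair of nonzero purely imaginary eigenvalues; in particular, no Hopf bifurcation can occur at $E_4$ as parameters vary within this feasibility region.
   Context: The model (S) is the system of ODEs for healthy bees $B$, infected bees $I$, healthy mites $M$ and infected mites $N$: $$B'=b\frac{B}{B+I}-\lambda BN-\gamma BI-mB,$$ $$I'=b\frac{I}{B+I}+\lambda BN+\gamma BI-(m+\mu)I,$$ $$M'=r\Big(1-\frac{M+N}{K}\Big)(M+N)-\beta MI-\delta MN-eMB,$$ $$N'=-nN-pN(N+M)+\beta MI+\delta MN-eNB,$$ where all parameters $b,\lambda,\gamma,m,\mu,r,K,\beta,\delta,e,n,p$ are positive constants. *)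

(* Defs.v *)
From HB Require Import structures.
From mathcomp Require Import all_boot all_order all_algebra.
Set Implicit Arguments. Unset Strict Implicit. Unset Printing Implicit Defensive.
Import Order.TTheory GRing.Theory Num.Theory.
Local Open Scope ring_scope.

(* Entry (i,j) of the Jacobian of system (S) at the point (B,I,M,N);
   variables ordered 0 = B, 1 = I, 2 = M, 3 = N (rows = equations B',I',M',N'). *)
Definition jacS_entry (F : fieldType)
  (b lam gam m mu r K beta delta e n p : F) (B I M N : F) (i j : nat) : F :=
  match i, j with
  (* B' = b B/(B+I) - lam B N - gam B I - m B *)
  | 0, 0 => b * I / (B + I) ^+ 2 - lam * N - gam * I - m
  | 0, 1 => - (b * B / (B + I) ^+ 2) - gam * B
  | 0, 2 => 0
  | 0, 3 => - (lam * B)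
  (* I' = b I/(B+I) + lam B N + gam B I - (m+mu) I *)
  | 1, 0 => - (b * I / (B + I) ^+ 2) + lam * N + gam * I
  | 1, 1 => b * B / (B + I) ^+ 2 + gam * B - (m + mu)
  | 1, 2 => 0
  | 1, 3 => lam * B
  (* M' = r (1 - (M+N)/K) (M+N) - beta M I - delta M N - e M B *)
  | 2, 0 => - (e * M)
  | 2, 1 => - (beta * M)
  | 2, 2 => r * (1 - 2%:R * (M + N) / K) - beta * I - delta * N - e * B
  | 2, 3 => r * (1 - 2%:R * (M + N) / K) - delta * M
  (* N' = - n N - p N (N+M) + beta M I + delta M N - e N B *)
  | 3, 0 => - (e * N)
  | 3, 1 => beta * M
  | 3, 2 => - (p * N) + beta * I + delta * N
  | 3, 3 => - n - p * (2%:R * N + M) + delta * M - e * B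
  | _, _ => 0
  end.

Definition jacS (F : fieldType)
  (b lam gam m mu r K beta delta e n p : F) (B I M N : F) : 'M[F]_4 :=
  \matrix_(i < 4, j < 4) jacS_entry b lam gam m mu r K beta delta e n p B I M N i j.

Definition E4_B (F : fieldType) (b gam m mu : F) : F :=
  (mu ^+ 2 - b * gam + m * mu) / (mu * gam).
Definition E4_I (F : fieldType) (b gam m mu : F) : F :=
  (b * gam - m * mu) / (mu * gam).

Definition jacS_E4 (F : fieldType) (b lam gam m mu r K beta delta e n p : F) : 'M[F]_4 :=
  jacS b lam gam m mu r K beta delta e n p (E4_B b gam m mu) (E4_I b gam m mu) 0 0.

(* Main.v *)
Require Import Defs.
From HB Require Import structures.
From mathcomp Require Import all_boot all_order all_algebra.
From mathcomp Require Import ring.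
Import Order.TTheory GRing.Theory Num.Theory.
Local Open Scope ring_scope.

Lemma rect0 {C : numClosedFieldType} (u s : C) :
  u \is Num.real -> s \is Num.real -> u + 'i * s = 0 -> u = 0 /\ s = 0.
Proof.
move=> ur sr h.
have h2 : u - 'i * s = 0.
  have := congr1 (fun z => z^*) h.
  by rewrite rmorphD rmorphM /= conjCi (conj_Creal ur) (conj_Creal sr) rmorph0 mulNr.
have u0 : u = 0.
  have : u *+ 2 = 0.
    have -> : u *+ 2 = (u + 'i * s) + (u - 'i * s) by rewrite mulr2n; ring.
    by rewrite h h2 addr0.
  by move/eqP; rewrite mulrn_eq0 /= => /eqP.
split => //.
move: h; rewrite u0 add0r => /eqP; rewrite mulf_eq0 (negbTE (neq0Ci C)) /=.
by move/eqP.
Qed.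

Lemma quad_i {C : numClosedFieldType} {a b c d w : C} :
  a \is Num.real -> b \is Num.real -> c \is Num.real -> d \is Num.real ->
  w \is Num.real -> w != 0 ->
  (a - 'i * w) * (d - 'i * w) - b * c = 0 ->
  a + d = 0 /\ a * d - b * c = w ^+ 2.
Proof.
move=> ar br cr dr wr wn0 h.
have e : (a - 'i * w) * (d - 'i * w) - b * c
   = (a * d - b * c - w ^+ 2) + 'i * (- (w * (a + d))).
  have hi : 'i * 'i = -1 :> C by rewrite -expr2 sqrCi.
  apply/eqP; rewrite -subr_eq0; apply/eqP.
  transitivity (w ^+ 2 * ('i * 'i + 1)); first ring.
  by rewrite hi addNr mulr0.
rewrite e in h.
have [||h1 h2] := rect0 (a * d - b * c - w ^+ 2) (- (w * (a + d))) _ _ h.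
- by rewrite ?rpredB ?rpredM ?rpredX.
- by rewrite rpredN rpredM ?rpredD.
split; last by apply/eqP; rewrite -subr_eq0; apply/eqP.
by move/eqP: h2; rewrite oppr_eq0 mulf_eq0 (negbTE wn0) /= => /eqP.
Qed.

Lemma elim2 {C : numClosedFieldType} {x y a b c d l : C} :
  x * a + y * c = l * x -> x * b + y * d = l * y ->
  (a - l) * (d - l) - b * c != 0 -> x = 0 /\ y = 0.
Proof.
move=> h1 h2 hn.
have e1 : x * ((a - l) * (d - l) - b * c) = 0.
  transitivity ((d - l) * (x * a + y * c - l * x) - c * (x * b + y * d - l * y)); first ring.
  by rewrite h1 h2 !subrr !mulr0 subrr.
have e2 : y * ((a - l) * (d - l) - b * c) = 0.
  transitivity ((a - l) * (x * b + y * d - l * y) - b * (x * a + y * c - l * x)); first ring.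
  by rewrite h1 h2 !subrr !mulr0 subrr.
move/eqP: e1; move/eqP: e2; rewrite !mulf_eq0 (negbTE hn) !orbF.
by move=> /eqP -> /eqP ->.
Qed.

Section RealH.
Variable C : numClosedFieldType.
Lemma rD (x y : C) : x \is Num.real -> y \is Num.real -> x + y \is Num.real.
Proof. exact: rpredD. Qed.
Lemma rB (x y : C) : x \is Num.real -> y \is Num.real -> x - y \is Num.real.
Proof. exact: rpredB. Qed.
Lemma rM (x y : C) : x \is Num.real -> y \is Num.real -> x * y \is Num.real.
Proof. exact: rpredM. Qed.
Lemma rN (x : C) : x \is Num.real -> - x \is Num.real.
Proof. by rewrite rpredN. Qed.
Lemma rV (x : C) : x \is Num.real -> x^-1 \is Num.real.
Proof. by rewrite rpredV. Qed.
Lemma rX (x : C) n : x \is Num.real -> x ^+ n \is Num.real.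
Proof. exact: rpredX. Qed.
Lemma r0 : (0 : C) \is Num.real. Proof. exact: rpred0. Qed.
Lemma rn n : (n%:R : C) \is Num.real. Proof. exact: rpred_nat. Qed.
End RealH.

Ltac realt :=
  repeat (match goal with |- is_true (?x \in _) => change (x \is Num.real) end;
   first [ assumption | (apply: gtr0_real; assumption)
         | apply: rD | apply: rB | apply: rM | apply: rN | apply: rV | apply: rX
         | apply: r0 | apply: rn ]).

Theorem mainTheorem10 (C : numClosedFieldType)
  (b lam gam m mu r K beta delta e n p : C) :
  0 < b -> 0 < lam -> 0 < gam -> 0 < m -> 0 < mu -> 0 < r -> 0 < K ->
  0 < beta -> 0 < delta -> 0 < e -> 0 < n -> 0 < p ->
  0 < b * gam - m * mu -> b * gam - m * mu < mu ^+ 2 ->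
  forall w : C, w \is Num.real -> w != 0 ->
    ~~ eigenvalue (jacS_E4 b lam gam m mu r K beta delta e n p) ('i * w).
Proof.
move=> b0 l0 g0 m0 mu0 r0 K0 be0 de0 e0 n0 p0 q0 qlt w wr wn0.
apply/eigenvalueP => -[v hv vn0].
have hj : forall j, (v *m jacS_E4 b lam gam m mu r K beta delta e n p) 0 j = ('i * w *: v) 0 j.
  by move=> j; rewrite hv.
have := hj 0; have := hj 1; have := hj 2%:R; have := hj 3%:R.
rewrite !mxE !big_ord_recl !big_ord0 /= !mxE /=.
set B := E4_B b gam m mu. set I := E4_I b gam m mu.
set x0 := v 0 ord0. set x1 := v 0 (lift ord0 ord0).
set x2 := v 0 (lift ord0 (lift ord0 ord0)).
set x3 := v 0 (lift ord0 (lift ord0 (lift ord0 ord0))).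
have -> : v 0 1 = x1 by congr (v 0 _); apply: val_inj.
have -> : v 0 2 = x2 by congr (v 0 _); apply: val_inj.
have -> : v 0 3 = x3 by congr (v 0 _); apply: val_inj.
rewrite !(mulr0, mul0r, addr0, add0r, subr0, oppr0, mulr1).
move=> h3 h2 h1 h0.
set q := b * gam - m * mu.
have mun : mu != 0 by rewrite gt_eqF.
have gn : gam != 0 by rewrite gt_eqF.
have hB : 0 < B.
  rewrite /B /E4_B divr_gt0 ?mulr_gt0 //.
  have -> : mu ^+ 2 - b * gam + m * mu = mu ^+ 2 - q by rewrite /q; ring.
  by rewrite subr_gt0.
have hI : 0 < I by rewrite /I /E4_I divr_gt0 ?mulr_gt0.
have hT : B + I = mu / gam.
  by rewrite /B /I /E4_B /E4_I /q; field; rewrite gn mun.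
have Br := gtr0_real hB. have Ir := gtr0_real hI.
have [xz0 xz1] : x0 = 0 /\ x1 = 0.
  apply: (elim2 h0 h1); apply/eqP => hd.
  have := quad_i _ _ _ _ wr wn0 hd => H.
  destruct H as [ht _]; try by realt.
  move: ht; rewrite hT /B /I /E4_B /E4_I /q.
  have -> : (b * ((b * gam - m * mu) / (mu * gam)) / (mu / gam) ^+ 2 -
      gam * ((b * gam - m * mu) / (mu * gam)) - m +
    (b * ((mu ^+ 2 - b * gam + m * mu) / (mu * gam)) / (mu / gam) ^+ 2 +
      gam * ((mu ^+ 2 - b * gam + m * mu) / (mu * gam)) - (m + mu)))
    = - ((b * gam - m * mu + m * mu) / mu).
    by field; rewrite gn mun.
  move/eqP; rewrite oppr_eq0; apply/negP; rewrite gt_eqF // divr_gt0 //.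
  by rewrite addr_gt0 ?mulr_gt0.
move: h3; rewrite xz0 xz1 !mul0r !add0r => h3.
have [xz2 xz3] : x2 = 0 /\ x3 = 0.
  apply: (elim2 h2 h3); apply/eqP => hd.
  have := quad_i _ _ _ _ wr wn0 hd => H.
  destruct H as [ht hdet]; try by realt.
  set d0 := - n - e * B in ht hdet.
  have ha : r - beta * I - e * B = - d0 by apply/eqP; rewrite -subr_eq0 opprK; apply/eqP.
  rewrite ha in hdet.
  have hz : w ^+ 2 + d0 ^+ 2 + r * (beta * I) = 0.
    by rewrite -hdet; ring.
  have d0r : d0 \is Num.real by rewrite /d0; realt.
  have : 0 < w ^+ 2 + d0 ^+ 2 + r * (beta * I).
    have pos1 : 0 < w ^+ 2 + r * (beta * I).
      have w2 : 0 < w ^+ 2 by rewrite real_exprn_even_gt0.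
      exact: addr_gt0 w2 (mulr_gt0 r0 (mulr_gt0 be0 hI)).
    have -> : w ^+ 2 + d0 ^+ 2 + r * (beta * I) = d0 ^+ 2 + (w ^+ 2 + r * (beta * I)) by ring.
    by apply: (lt_le_trans pos1); rewrite lerDr -realEsqr.
  by rewrite hz ltxx.
apply/negP: vn0; apply/negPn/eqP/rowP => j; rewrite mxE.
case: j => [[|[|[|[|j]]]] hjj] //.
- by rewrite -xz0; congr (v 0 _); apply: val_inj.
- by rewrite -xz1; congr (v 0 _); apply: val_inj.
- by rewrite -xz2; congr (v 0 _); apply: val_inj.
- by rewrite -xz3; congr (v 0 _); apply: val_inj.
Qed.
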